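(* Let $X$ be an index set and $S_x$ ($x\in X$) a family of splinters. Then the direct product $S=\prod_{x\in X} S_x$ is a splinter.
   Context: A ring $S$ (not necessarily Noetherian) is a splinter if every finite and finitely presented ring map $S\to T$ that induces a surjective map $\operatorname{Spec}(T)\to\operatorname{Spec}(S)$ splits as a map of $S$-modules. *)

(* Defs.v *)
From HB Require Import structures.
From mathcomp Require Import all_boot all_algebra.
From mathcomp Require Import boolp.
Set Implicit Arguments. Unset Strict Implicit. Unset Printing Implicit Defensive.
Import GRing.Theory.
Local Open Scope ring_scope.

Definition is_prime_ideal (R : comPzRingType) (P : R -> Prop) : Prop :=
  [/\ P 0,
      (forall a b, P a -> P b -> P (a + b)),
      (forall a b, P b -> P (a * b)),
      ~ P 1 &
      (forall a b, P (a * b) -> P a \/ P b)].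

Definition spec_surjective (S T : comPzRingType) (f : {rmorphism S -> T}) : Prop :=
  forall p : S -> Prop, is_prime_ideal p ->
    exists q : T -> Prop, is_prime_ideal q /\ (forall s : S, p s <-> q (f s)).

Definition finite_map (S T : comPzRingType) (f : {rmorphism S -> T}) : Prop :=
  exists (n : nat) (g : 'I_n -> T),
    forall y : T, exists c : 'I_n -> S, y = \sum_(i < n) f (c i) * g i.

Inductive pexpr (S : Type) (n : nat) : Type :=
| PC : S -> pexpr S n
| PX : 'I_n -> pexpr S n
| PAdd : pexpr S n -> pexpr S n -> pexpr S n
| PMul : pexpr S n -> pexpr S n -> pexpr S n
| POpp : pexpr S n -> pexpr S n.
Arguments PC {S n}.
Arguments PX {S n}.
Arguments PAdd {S n}.
Arguments PMul {S n}.
Arguments POpp {S n}.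

Fixpoint peval (S T : comPzRingType) (f : S -> T) (n : nat) (t : 'I_n -> T)
  (p : pexpr S n) : T :=
  match p with
  | PC s => f s
  | PX i => t i
  | PAdd p q => peval f t p + peval f t q
  | PMul p q => peval f t p * peval f t q
  | POpp p => - peval f t p
  end.

(** [pcong rels] is the congruence on expressions whose quotient is
    S[X_0..X_{n-1}] / (rels): the smallest congruence containing the
    commutative S-algebra axioms and identifying each relation with 0. *)
Inductive pcong (S : comPzRingType) (n m : nat) (rels : 'I_m -> pexpr S n)
  : pexpr S n -> pexpr S n -> Prop :=
| pc_refl p : pcong rels p p
| pc_sym p q : pcong rels p q -> pcong rels q p
| pc_trans p q r : pcong rels p q -> pcong rels q r -> pcong rels p r
| pc_add p p' q q' : pcong rels p p' -> pcong rels q q' ->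
    pcong rels (PAdd p q) (PAdd p' q')
| pc_mul p p' q q' : pcong rels p p' -> pcong rels q q' ->
    pcong rels (PMul p q) (PMul p' q')
| pc_opp p p' : pcong rels p p' -> pcong rels (POpp p) (POpp p')
| pc_addA p q r : pcong rels (PAdd p (PAdd q r)) (PAdd (PAdd p q) r)
| pc_addC p q : pcong rels (PAdd p q) (PAdd q p)
| pc_add0 p : pcong rels (PAdd (PC 0) p) p
| pc_addN p : pcong rels (PAdd (POpp p) p) (PC 0)
| pc_mulA p q r : pcong rels (PMul p (PMul q r)) (PMul (PMul p q) r)
| pc_mulC p q : pcong rels (PMul p q) (PMul q p)
| pc_mul1 p : pcong rels (PMul (PC 1) p) p
| pc_mulD p q r : pcong rels (PMul p (PAdd q r)) (PAdd (PMul p q) (PMul p r))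
| pc_Cadd a b : pcong rels (PC (a + b)) (PAdd (PC a) (PC b))
| pc_Cmul a b : pcong rels (PC (a * b)) (PMul (PC a) (PC b))
| pc_rel j : pcong rels (rels j) (PC 0).

(** finitely presented: T is isomorphic, as an S-algebra via f, to
    S[X_0..X_{n-1}]/(r_1,..,r_m) for some n and finitely many r_j:
    the S-algebra map X_i |-> t i is surjective, kills the relations,
    and its kernel is exactly the ideal generated by the relations. *)
Definition finitely_presented_map (S T : comPzRingType) (f : {rmorphism S -> T})
  : Prop :=
  exists (n m : nat) (t : 'I_n -> T) (rels : 'I_m -> pexpr S n),
    [/\ (forall y : T, exists p, peval f t p = y),
        (forall j, peval f t (rels j) = 0) &
        (forall p q, peval f t p = peval f t q -> pcong rels p q)].

Definition splits_as_module (S T : comPzRingType) (f : {rmorphism S -> T}) : Prop :=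
  exists sigma : T -> S,
    [/\ (forall y z : T, sigma (y + z) = sigma y + sigma z),
        (forall (s : S) (y : T), sigma (f s * y) = s * sigma y) &
        (forall s : S, sigma (f s) = s)].

Definition splinter (S : comPzRingType) : Prop :=
  forall (T : comPzRingType) (f : {rmorphism S -> T}),
    finite_map f -> finitely_presented_map f -> spec_surjective f ->
    splits_as_module f.

Definition dprod (X : Type) (S : X -> comPzRingType) : Type := forall x, S x.

Section DProd.
Variables (X : Type) (S : X -> comPzRingType).
Local Notation P := (dprod S).

HB.instance Definition _ := Choice.copy P (forall x, S x).

Definition dp_zero : P := fun x => 0.
Definition dp_one : P := fun x => 1.
Definition dp_opp (a : P) : P := fun x => - a x.
Definition dp_add (a b : P) : P := fun x => a x + b x.
Definition dp_mul (a b : P) : P := fun x => a x * b x.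

Lemma dp_addA : associative dp_add.
Proof. by move=> a b c; apply: functional_extensionality_dep => x; rewrite /dp_add addrA. Qed.
Lemma dp_addC : commutative dp_add.
Proof. by move=> a b; apply: functional_extensionality_dep => x; rewrite /dp_add addrC. Qed.
Lemma dp_add0 : left_id dp_zero dp_add.
Proof. by move=> a; apply: functional_extensionality_dep => x; rewrite /dp_add add0r. Qed.
Lemma dp_addN : left_inverse dp_zero dp_opp dp_add.
Proof. by move=> a; apply: functional_extensionality_dep => x; rewrite /dp_add /dp_opp addNr. Qed.
Lemma dp_mulA : associative dp_mul.
Proof. by move=> a b c; apply: functional_extensionality_dep => x; rewrite /dp_mul mulrA. Qed.
Lemma dp_mul1 : left_id dp_one dp_mul.
Proof. by move=> a; apply: functional_extensionality_dep => x; rewrite /dp_mul mul1r. Qed.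
Lemma dp_mulr1 : right_id dp_one dp_mul.
Proof. by move=> a; apply: functional_extensionality_dep => x; rewrite /dp_mul mulr1. Qed.
Lemma dp_mulDl : left_distributive dp_mul dp_add.
Proof. by move=> a b c; apply: functional_extensionality_dep => x; rewrite /dp_mul /dp_add mulrDl. Qed.
Lemma dp_mulDr : right_distributive dp_mul dp_add.
Proof. by move=> a b c; apply: functional_extensionality_dep => x; rewrite /dp_mul /dp_add mulrDr. Qed.
Lemma dp_mulC : commutative dp_mul.
Proof. by move=> a b; apply: functional_extensionality_dep => x; rewrite /dp_mul mulrC. Qed.

HB.instance Definition _ := GRing.isPzRing.Build P
  dp_addA dp_addC dp_add0 dp_addN dp_mulA dp_mul1 dp_mulr1 dp_mulDl dp_mulDr.
HB.instance Definition _ := GRing.PzRing_hasCommutativeMul.Build P dp_mulC.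
End DProd.

Check fun (X : Type) (S : X -> comPzRingType) => (dprod S : comPzRingType).

(* Main.v *)
From HB Require Import structures.
Require Import Defs.
From mathcomp Require Import all_boot all_algebra.
From mathcomp Require Import boolp.
Set Implicit Arguments. Unset Strict Implicit. Unset Printing Implicit Defensive.
Import GRing.Theory.
Local Open Scope ring_scope.

Section Corner.
Variables (R : comPzRingType) (e : R).
Hypothesis He : e * e = e.

Definition corner_ (_ : e * e = e) := {y : R | e * y == y}.
Definition corner := corner_ He.
HB.instance Definition _ := Choice.on corner.

Lemma cP (y : corner) : e * val y = val y.
Proof. exact/eqP/(valP y). Qed.

Definition c_zero : corner := exist (fun y => e * y == y) 0 (introT eqP (mulr0 e)).
Definition c_one : corner := exist (fun y => e * y == y) e (introT eqP He).
Lemma c_add_subproof (a b : corner) : e * (val a + val b) == val a + val b.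
Proof. by rewrite mulrDr !cP. Qed.
Definition c_add (a b : corner) : corner := exist (fun y => e * y == y) _ (c_add_subproof a b).
Lemma c_opp_subproof (a : corner) : e * (- val a) == - val a.
Proof. by rewrite mulrN cP. Qed.
Definition c_opp (a : corner) : corner := exist (fun y => e * y == y) _ (c_opp_subproof a).
Lemma c_mul_subproof (a b : corner) : e * (val a * val b) == val a * val b.
Proof. by rewrite mulrA cP. Qed.
Definition c_mul (a b : corner) : corner := exist (fun y => e * y == y) _ (c_mul_subproof a b).

Lemma c_addA : associative c_add.
Proof. by move=> a b c; apply: val_inj; rewrite /= addrA. Qed.
Lemma c_addC : commutative c_add.
Proof. by move=> a b; apply: val_inj; rewrite /= addrC. Qed.
Lemma c_add0 : left_id c_zero c_add.
Proof. by move=> a; apply: val_inj; rewrite /= add0r. Qed.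
Lemma c_addN : left_inverse c_zero c_opp c_add.
Proof. by move=> a; apply: val_inj; rewrite /= addNr. Qed.
Lemma c_mulA : associative c_mul.
Proof. by move=> a b c; apply: val_inj; rewrite /= mulrA. Qed.
Lemma c_mul1 : left_id c_one c_mul.
Proof. by move=> a; apply: val_inj; rewrite /= cP. Qed.
Lemma c_mulr1 : right_id c_one c_mul.
Proof. by move=> a; apply: val_inj; rewrite /= mulrC cP. Qed.
Lemma c_mulDl : left_distributive c_mul c_add.
Proof. by move=> a b c; apply: val_inj; rewrite /= mulrDl. Qed.
Lemma c_mulDr : right_distributive c_mul c_add.
Proof. by move=> a b c; apply: val_inj; rewrite /= mulrDr. Qed.
Lemma c_mulC : commutative c_mul.
Proof. by move=> a b; apply: val_inj; rewrite /= mulrC. Qed.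

HB.instance Definition _ := GRing.isPzRing.Build corner
  c_addA c_addC c_add0 c_addN c_mulA c_mul1 c_mulr1 c_mulDl c_mulDr.
HB.instance Definition _ := GRing.PzRing_hasCommutativeMul.Build corner c_mulC.

Lemma val_cadd (a b : corner) : val (a + b) = val a + val b. Proof. by []. Qed.
Lemma val_cmul (a b : corner) : val (a * b) = val a * val b. Proof. by []. Qed.
Lemma val_copp (a : corner) : val (- a) = - val a. Proof. by []. Qed.
Lemma val_c0 : val (0 : corner) = 0. Proof. by []. Qed.
Lemma val_c1 : val (1 : corner) = e. Proof. by []. Qed.
End Corner.

Section Iota.
Variables (X : Type) (S : X -> comPzRingType).

Definition iotx (x : X) (s : S x) : dprod S := fun x' =>
  match pselect (x = x') with left h => eq_rect x S s x' h | right _ => 0 end.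

Lemma iotx_same x (s : S x) : iotx s x = s.
Proof.
rewrite /iotx; case: pselect => [h|//].
by rewrite (Prop_irrelevance h erefl).
Qed.

Lemma dpE0 x : (0 : dprod S) x = 0. Proof. by []. Qed.
Lemma dpE1 x : (1 : dprod S) x = 1. Proof. by []. Qed.
Lemma dpED (a b : dprod S) x : (a + b) x = a x + b x. Proof. by []. Qed.
Lemma dpEM (a b : dprod S) x : (a * b) x = a x * b x. Proof. by []. Qed.
Lemma dpEN (a : dprod S) x : (- a) x = - a x. Proof. by []. Qed.
Lemma dp_ext (a b : dprod S) : (forall x, a x = b x) -> a = b.
Proof. exact: functional_extensionality_dep. Qed.

Lemma iotxD x (a b : S x) : iotx (a + b) = iotx a + iotx b.
Proof.
apply: dp_ext => x'; rewrite dpED /iotx; case: pselect => [h|_]; last by rewrite addr0.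
by case: x' / h.
Qed.
Lemma iotxM x (a b : S x) : iotx (a * b) = iotx a * iotx b.
Proof.
apply: dp_ext => x'; rewrite dpEM /iotx; case: pselect => [h|_]; last by rewrite mulr0.
by case: x' / h.
Qed.
Lemma iotx0 x : iotx (0 : S x) = 0.
Proof.
apply: dp_ext => x'; rewrite /iotx; case: pselect => [h|_] //.
by case: x' / h.
Qed.
Definition ee x := iotx (1 : S x).
Lemma iotx_proj x (s : dprod S) : iotx (s x) = ee x * s.
Proof.
apply: dp_ext => x'; rewrite dpEM /ee /iotx; case: pselect => [h|_]; last by rewrite mul0r.
by case: x' / h; rewrite mul1r.
Qed.
Lemma ee_idem x : ee x * ee x = ee x.
Proof. by rewrite /ee -iotxM mulr1. Qed.
Lemma ee_x x : ee x x = 1.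
Proof. by rewrite /ee iotx_same. Qed.
Lemma ee_iota x (s : S x) : ee x * iotx s = iotx s.
Proof. by rewrite /ee -iotxM mul1r. Qed.
End Iota.
Fixpoint pxmap (A B : Type) (h : A -> B) n (p : pexpr A n) : pexpr B n :=
  match p with
  | PC s => PC (h s)
  | PX i => PX i
  | PAdd p q => PAdd (pxmap h p) (pxmap h q)
  | PMul p q => PMul (pxmap h p) (pxmap h q)
  | POpp p => POpp (pxmap h p)
  end.

Lemma pxmapK (A B : Type) (h : A -> B) (g : B -> A) n (p : pexpr A n) :
  (forall a, g (h a) = a) -> pxmap g (pxmap h p) = p.
Proof. by move=> K; elim: p => /= [s|i|p IHp q IHq|p IHp q IHq|p IHp]; rewrite ?K ?IHp ?IHq. Qed.

Lemma pcong_map (A B : comPzRingType) (h : A -> B) (h0 : h 0 = 0) (h1 : h 1 = 1)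
  (hD : forall a b, h (a + b) = h a + h b) (hM : forall a b, h (a * b) = h a * h b)
  n m (rels : 'I_m -> pexpr A n) p q :
  pcong rels p q -> pcong (fun j => pxmap h (rels j)) (pxmap h p) (pxmap h q).
Proof.
elim => /=; try by (intros; econstructor; eauto).
- by move=> p0; rewrite h0; constructor.
- by move=> p0; rewrite h0; constructor.
- by move=> p0; rewrite h1; constructor.
- by move=> a b; rewrite hD; constructor.
- by move=> a b; rewrite hM; constructor.
- by move=> j; rewrite h0; apply: (pc_rel (fun j => pxmap h (rels j))).
Qed.
Section Main.
Variables (X : Type) (S : X -> comPzRingType) (T : comPzRingType)
  (f : {rmorphism dprod S -> T}).

Section Local.
Variable x : X.
Definition e := f (ee S x).
Lemma He : e * e = e. Proof. by rewrite /e -rmorphM ee_idem. Qed.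
Definition Tx := corner He.

Lemma fx_subproof (s : S x) : e * f (iotx s) == f (iotx s).
Proof. by rewrite /e -rmorphM ee_iota. Qed.
Definition fx (s : S x) : Tx := exist (fun y => e * y == y) _ (fx_subproof s).

Lemma fx_nmod : nmod_morphism fx.
Proof.
split; first by apply: val_inj; rewrite /= iotx0 rmorph0.
by move=> a b; apply: val_inj; rewrite /= iotxD rmorphD.
Qed.
Lemma fx_mon : monoid_morphism fx.
Proof.
split; first by apply: val_inj.
by move=> a b; apply: val_inj; rewrite /= iotxM rmorphM.
Qed.
HB.instance Definition _ := GRing.isNmodMorphism.Build _ _ fx fx_nmod.
HB.instance Definition _ := GRing.isMonoidMorphism.Build _ _ fx fx_mon.
Definition fxm : {rmorphism S x -> Tx} := fx.

Lemma cproj_subproof (y : T) : e * (e * y) == e * y.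
Proof. by rewrite mulrA He. Qed.
Definition cproj (y : T) : Tx := exist (fun y => e * y == y) _ (cproj_subproof y).

Lemma val_fx s : val (fx s) = f (iotx s). Proof. by []. Qed.

Lemma fx_proj (s : dprod S) : val (fx (s x)) = e * f s.
Proof. by rewrite val_fx iotx_proj rmorphM. Qed.

Lemma peval_proj n (t : 'I_n -> T) (p : pexpr (dprod S) n) :
  val (peval fx (fun i => cproj (t i)) (pxmap (fun s => s x) p)) = e * peval f t p.
Proof.
elim: p => /= [s|i|p IHp q IHq|p IHp q IHq|p IHp].
- exact: fx_proj.
- by [].
- by rewrite mulrDr -IHp -IHq.
- by rewrite -[in RHS]He mulrACA -IHp -IHq.
- by rewrite mulrN -IHp.
Qed.

Lemma val_csum n (F : 'I_n -> Tx) : val (\sum_(i < n) F i) = \sum_(i < n) val (F i).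
Proof.
by apply: (big_morph (fun y : Tx => val y)) => // a b; rewrite val_cadd.
Qed.

Lemma fx_finite : finite_map f -> finite_map fxm.
Proof.
case=> n [g Hg]; exists n, (fun i => cproj (g i)) => y.
have [c Hc] := Hg (val y).
exists (fun i => c i x); apply: val_inj.
rewrite val_csum -(cP y) Hc mulr_sumr; apply: eq_bigr => i _.
by rewrite val_cmul fx_proj /= mulrACA He.
Qed.

Lemma fx_fp : finitely_presented_map f -> finitely_presented_map fxm.
Proof.
case=> n [m [t [rels [Hs Hr Hi]]]].
exists n, m, (fun i => cproj (t i)), (fun j => pxmap (fun s : dprod S => s x) (rels j)).
split.
- move=> y; have [p Hp] := Hs (val y).
  exists (pxmap (fun s : dprod S => s x) p); apply: val_inj.
  by rewrite peval_proj Hp cP.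
- by move=> j; apply: val_inj; rewrite peval_proj Hr mulr0.
- move=> p q Hpq.
  pose P := PMul (PC (ee S x)) (pxmap (@iotx X S x) p).
  pose Q := PMul (PC (ee S x)) (pxmap (@iotx X S x) q).
  have K : forall a : S x, iotx a x = a by move=> a; rewrite iotx_same.
  have HPQ : peval f t P = peval f t Q.
    rewrite /P /Q /= -!peval_proj !pxmapK //.
    by rewrite -/e Hpq.
  have := pcong_map (h := fun s : dprod S => s x) erefl erefl
     (fun _ _ => erefl) (fun _ _ => erefl) (Hi _ _ HPQ).
  rewrite /P /Q /= !pxmapK // ee_x => H.
  apply: pc_trans (pc_sym (pc_mul1 _ _)) _.
  exact: pc_trans H (pc_mul1 _ _).
Qed.

Lemma fx_spec : spec_surjective f -> spec_surjective fxm.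
Proof.
move=> Hsp px [p0 pD pM p1 pP].
have PP : is_prime_ideal (fun s : dprod S => px (s x)).
  split => //.
  - by move=> a b; apply: pD.
  - by move=> a b; apply: pM.
  - by move=> a b; apply: pP.
have [Q [[q0 qD qM q1 qP] HQ]] := Hsp _ PP.
exists (fun y : Tx => Q (val y)); split.
- split => //.
  + by move=> a b; apply: qD.
  + by move=> a b; apply: qM.
  + by rewrite val_c1 /e -HQ ee_x.
  + by move=> a b; apply: qP.
- by move=> s; change (px s <-> Q (f (iotx s))); rewrite -HQ iotx_same.
Qed.
End Local.

Lemma dprod_split : (forall x, splits_as_module (fxm x)) -> splits_as_module f.
Proof.
move=> Hsp.
pose sig x := sval (cid (Hsp x)).
have Hsig x := svalP (cid (Hsp x)).
exists (fun y : T => ((fun x => sig x (cproj x y)) : dprod S)).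
split.
- move=> y z; apply: dp_ext => x; rewrite dpED.
  have [H1 H2 H3] := Hsig x; rewrite -H1; congr (sig x _).
  by apply: val_inj; rewrite /= mulrDr.
- move=> s y; apply: dp_ext => x; rewrite dpEM.
  have [H1 H2 H3] := Hsig x; rewrite -H2; congr (sig x _).
  apply: val_inj; rewrite val_cmul fx_proj /=.
  by rewrite mulrACA He mulrA.
- move=> s; apply: dp_ext => x.
  have [H1 H2 H3] := Hsig x; rewrite -[RHS]H3; congr (sig x _).
  by apply: val_inj; rewrite fx_proj.
Qed.

End Main.

Theorem lemma2p4 (X : Type) (S : X -> comPzRingType) :
  (forall x : X, splinter (S x)) -> splinter (dprod S).
Proof.
move=> Hx T f Hfin Hfp Hsp; apply: dprod_split => x.
apply: Hx; [exact: fx_finite | exact: fx_fp | exact: fx_spec].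
Qed.
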